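(* Let $\tilde L$ be a minimum-size counterexample. If $x$ is doubly irreducible in $\tilde L$, then $|{\uparrow}x|=\frac{|\tilde L|+1}{2}$.
   Context: For a poset $P$, $x$ upper covers $y$ (and $y$ lower covers $x$) if $y<x$ with nothing strictly between. Join-irreducible: upper covers exactly one element; meet-irreducible: lower covers exactly one element; doubly irreducible: both. For $x\in P$, ${\uparrow}x=\{y\in P: x\le y\}$. A counterexample is a finite lattice $L$ with $|L|>1$ in which every join-irreducible $j$ satisfies $|{\uparrow}j|>|L|/2$; a minimum-size counterexample is a counterexample $\tilde L$ such that no counterexample has fewer elements. *)

(* Defs.v *)
From mathcomp Require Import all_boot all_order.
Set Implicit Arguments. Unset Strict Implicit. Unset Printing Implicit Defensive.
Import Order.TTheory.
Local Open Scope order_scope.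

Section LatticeDefs.
Context {d : Order.disp_t} {L : finLatticeType d}.

Definition ucovers (x y : L) : bool :=
  (y < x) && [forall z : L, ~~ ((y < z) && (z < x))].

Definition lower_covers (x : L) : {set L} := [set y | ucovers x y].
Definition upper_covers (x : L) : {set L} := [set y | ucovers y x].

Definition join_irreducible (x : L) : bool := #|lower_covers x| == 1%N.
Definition meet_irreducible (x : L) : bool := #|upper_covers x| == 1%N.
Definition doubly_irreducible (x : L) : bool :=
  join_irreducible x && meet_irreducible x.

Definition upset (x : L) : {set L} := [set y | x <= y].

End LatticeDefs.

Definition counterexample {d : Order.disp_t} (L : finLatticeType d) : Prop :=
  (1 < #|L|)%N /\
  forall j : L, join_irreducible j -> (#|L| < 2 * #|upset j|)%N.

Definition min_counterexample {d : Order.disp_t} (L : finLatticeType d) : Prop :=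
  counterexample L /\
  forall (d' : Order.disp_t) (L' : finLatticeType d'),
    counterexample L' -> (#|L| <= #|L'|)%N.

(* Main.v *)
Require Import Defs.
From mathcomp Require Import all_boot all_order.
From HB Require Import structures.
From mathcomp Require Import zify.
Set Implicit Arguments. Unset Strict Implicit. Unset Printing Implicit Defensive.
Import Order.TTheory.
Local Open Scope order_scope.

Section Covers.
Context {d : Order.disp_t} {L : finLatticeType d}.

Lemma down_lt (w z : L) : w < z -> (#|[set v | (v <= w)%O]| < #|[set v | (v <= z)%O]|)%N.
Proof.
move=> wz; apply: proper_card; apply/properP; split.
  apply/subsetP=> v; rewrite !inE => vw; exact: le_trans vw (ltW wz).
exists z; rewrite !inE //; by rewrite lt_geF.
Qed.

Lemma up_lt (w z : L) : w < z -> (#|[set v | (z <= v)%O]| < #|[set v | (w <= v)%O]|)%N.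
Proof.
move=> wz; apply: proper_card; apply/properP; split.
  apply/subsetP=> v; rewrite !inE => vw; exact: le_trans (ltW wz) vw.
exists w; rewrite !inE //; by rewrite lt_geF.
Qed.

Lemma up_cover (x y : L) : x < y -> exists2 c, ucovers c x & c <= y.
Proof.
move=> xy.
have yS : (fun z => (x < z) && (z <= y)) y by rewrite /= xy lexx.
case: (@arg_minnP L y (fun z => (x < z) && (z <= y)) (fun z => #|[set v | (v <= z)%O]|) yS) => z /andP[xz zy] zmin.
exists z => //; rewrite /ucovers xz /=; apply/forallP => w; apply/negP=> /andP[xw wz].
have := zmin w; rewrite xw (le_trans (ltW wz) zy) => /(_ isT).
by rewrite leqNgt down_lt.
Qed.

Lemma lo_cover (x y : L) : y < x -> exists2 c, ucovers x c & y <= c.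
Proof.
move=> yx.
have yS : (fun z => (y <= z) && (z < x)) y by rewrite /= yx lexx.
case: (@arg_minnP L y (fun z => (y <= z) && (z < x)) (fun z => #|[set v | (z <= v)%O]|) yS) => z /andP[yz zx] zmin.
exists z => //; rewrite /ucovers zx /=; apply/forallP => w; apply/negP=> /andP[zw wx].
have := zmin w; rewrite wx (le_trans yz (ltW zw)) => /(_ isT).
by rewrite leqNgt up_lt.
Qed.

End Covers.

Section Sub.
Context {d : Order.disp_t} {L : finLatticeType d} (x : L) (H : doubly_irreducible x).

Definition xl : L := odflt x [pick y in lower_covers x].
Definition xu : L := odflt x [pick y in upper_covers x].

Lemma xlP : ucovers x xl.
Proof.
case/andP: H => /cards1P[y Hy] _.
rewrite /xl; case: pickP => [z|]; first by rewrite /lower_covers inE.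
by move/(_ y); rewrite Hy inE eqxx.
Qed.

Lemma xuP : ucovers xu x.
Proof.
case/andP: H => _ /cards1P[y Hy].
rewrite /xu; case: pickP => [z|]; first by rewrite /upper_covers inE.
by move/(_ y); rewrite Hy inE eqxx.
Qed.

Lemma xl_lt : xl < x. Proof. by case/andP: xlP. Qed.
Lemma xu_gt : x < xu. Proof. by case/andP: xuP. Qed.

Lemma below_x (c : L) : c < x -> c <= xl.
Proof.
case/lo_cover=> e He ce; case/andP: H => /cards1P[y Hy] _.
have : e \in lower_covers x by rewrite inE.
have : xl \in lower_covers x by rewrite inE xlP.
by rewrite Hy !inE => /eqP-> /eqP<-.
Qed.

Lemma above_x (c : L) : x < c -> xu <= c.
Proof.
case/up_cover=> e He ce; case/andP: H => _ /cards1P[y Hy].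
have : e \in upper_covers x by rewrite inE.
have : xu \in upper_covers x by rewrite inE xuP.
by rewrite Hy !inE => /eqP-> /eqP<-.
Qed.

Definition T (_ : doubly_irreducible x) := {y : L | y != x}.
Local Notation TT := (T H).
HB.instance Definition _ := Finite.on TT.
HB.instance Definition _ := [isSub of TT for val].
HB.instance Definition _ := [SubChoice_isSubPOrder of TT by <: with d].

Definition xlT : TT := exist _ xl (negbT (lt_eqF xl_lt)).
Definition xuT : TT := exist _ xu (negbT (gt_eqF xu_gt)).

Definition meetT (a b : TT) : TT := insubd xlT (val a `&` val b).
Definition joinT (a b : TT) : TT := insubd xuT (val a `|` val b).

Lemma meetTP (c a b : TT) : (c <= meetT a b) = (c <= a) && (c <= b).
Proof.
rewrite !leEsub val_insubd -lexI; case: ifP => // /negbFE/eqP->.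
apply/idP/idP => [cl|cx]; first exact: le_trans cl (ltW xl_lt).
by apply: below_x; rewrite lt_neqAle cx (valP c).
Qed.

Lemma joinTP (a b c : TT) : (joinT a b <= c) = (a <= c) && (b <= c).
Proof.
rewrite !leEsub val_insubd -leUx; case: ifP => // /negbFE/eqP->.
apply/idP/idP => [cl|cx]; first exact: le_trans (ltW xu_gt) cl.
by apply: above_x; rewrite lt_neqAle cx eq_sym (valP c).
Qed.

HB.instance Definition _ := Order.POrder_MeetJoin_isLattice.Build d TT meetTP joinTP.


Lemma cardT : #|(TT : finType)| = #|L|.-1.
Proof. rewrite -(cardC1 x) -(card_sig (fun y : L => y != x)). reflexivity. Qed.

Lemma cardT_gt1 : (1 < #|(TT : finType)|)%N.
Proof.
apply/card_gt1P; exists xlT, xuT; split => //.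
apply/negP => /eqP/(congr1 val) /= e.
by have := lt_trans xl_lt xu_gt; rewrite e ltxx.
Qed.

Lemma card_upT (j : TT) : #|upset j| = #|upset (val j) :\ x|.
Proof.
have E : val @: upset j = upset (val j) :\ x.
  apply/setP => y; rewrite !inE.
apply/imsetP/andP => [[z]|[yx jy]].
  by rewrite inE leEsub => jz ->; split => //; exact: (valP z).
by exists (exist _ y yx); rewrite // inE leEsub.
by rewrite -E card_imset //; exact: val_inj.
Qed.

Lemma ucT (j z : TT) : val j != xu -> ucovers j z = ucovers (val j) (val z).
Proof.
move=> jxu; rewrite /ucovers ltEsub; case: (val z < val j) => //=.
apply/forallP/forallP => [Hf w|Hf w].
  apply/negP=> /andP[zw wj]; case: (eqVneq w x) => [wx|wx].
    subst w; have xj := above_x wj.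
    have xuj : xu < val j by rewrite lt_neqAle xj eq_sym jxu.
    have := Hf xuT; rewrite !ltEsub /= xuj (lt_trans zw xu_gt) //.
  by have := Hf (exist _ w wx); rewrite !ltEsub /= zw wj.
by have := Hf (val w); rewrite !ltEsub.
Qed.

Lemma lcT (j : TT) : val j != xu -> val @: lower_covers j = lower_covers (val j).
Proof.
move=> jxu; apply/setP => y; rewrite inE; apply/imsetP/idP => [[z]|yc].
  by rewrite inE ucT // => ? ->.
have yx : y != x.
  apply/eqP => yx; subst y.
  case/andP: H => _ /cards1P[u Hu].
  have : val j \in upper_covers x by rewrite inE.
  have : xu \in upper_covers x by rewrite inE xuP.
  by rewrite Hu !inE => /eqP xuu /eqP je; rewrite je xuu eqxx in jxu.
by exists (exist _ y yx) => //; rewrite inE ucT.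
Qed.

Lemma jiT (j : TT) : val j != xu -> join_irreducible j -> join_irreducible (val j).
Proof. by move=> jxu; rewrite /join_irreducible -lcT // card_imset //; exact: val_inj. Qed.

Lemma main_sub : min_counterexample L -> (2 * #|upset x| = #|L| + 1)%N.
Proof.
move=> [[L1 Lce] Lmin].
have nce : ~ counterexample TT.
  by move=> /Lmin; rewrite cardT; case: #|L| L1 => // n _; rewrite ltnn.
have Jx : (#|L| < 2 * #|upset x|)%N by apply: Lce; case/andP: H.
case: (boolP [exists j : TT, join_irreducible j && ~~ (#|(TT : finType)| < 2 * #|upset j|)%N]); last first.
  move/existsPn => Hn; exfalso; apply: nce; split; first exact: cardT_gt1.
  by move=> j Jj; have := Hn j; rewrite Jj /= negbK.
case/existsP => j /andP[Jj]; rewrite -leqNgt card_upT cardT => Hj.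
have eL := prednK (ltnW L1).
have upx : #|upset x| = #|upset xu| + 1.
  suff E : upset x :\ x = upset xu by rewrite (cardsD1 x) inE lexx E addnC.
  apply/setP => y; rewrite !inE; apply/andP/idP => [[yx xy]|xuy].
    by apply: above_x; rewrite lt_neqAle eq_sym yx xy.
  split; last exact: le_trans (ltW xu_gt) xuy.
  by apply/eqP => yx; subst y; have := lt_le_trans xu_gt xuy; rewrite ltxx.
case: (eqVneq (val j) xu) => [jxu|jxu].
  move: Hj; rewrite jxu.
  have -> : upset xu :\ x = upset xu.
    apply/setP => y; rewrite !inE; case: (eqVneq y x) => // ->.
    by rewrite /= lt_geF // xu_gt.
  move: Jx; rewrite upx => h1 h2; lia.
have := Lce _ (jiT jxu Jj).
move: Hj; rewrite [#|upset (val j)|](cardsD1 x) inE.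
case: (boolP (val j <= x)) => /= jx; last first.
  by rewrite add0n => h1 h2; have := leq_trans h2 h1; rewrite ltnNge leq_pred.
have jltx : val j < x by rewrite lt_neqAle jx (valP j).
have : (#|upset x| < #|upset (val j)|)%N.
  apply: proper_card; apply/properP; split.
    by apply/subsetP=> y; rewrite !inE; apply: le_trans.
  by exists (val j); rewrite !inE ?lexx // lt_geF.
rewrite [#|upset (val j)|](cardsD1 x) inE jx.
move: Jx; rewrite upx => h1 h2 h3 h4.
have e : val j = sval j by [].
rewrite e /= in h2. set D := #|upset (sval j) :\ x| in h2 h3 h4. set n := #|L| in h1 h3 eL h4 *. set U := #|upset xu| in h1 h2 *. lia.
Qed.

End Sub.


Unset Implicit Arguments.
Local Close Scope order_scope.

Theorem lemma2p5 (d : Order.disp_t) (L : finLatticeType d) (x : L) :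
  min_counterexample L -> doubly_irreducible x ->
  (2 * #|upset x| = #|L| + 1)%N.
Proof. by move=> Hm Hx; exact: (main_sub Hx Hm). Qed.
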